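(* Let $(M,\mathcal F,\mathcal J)$ be a generalized almost para-Hermitian manifold with associated triple $(\gamma,\psi,F)$ and let $\iota:N\hookrightarrow M$ be a submanifold. Then $N$ is a regular invariant submanifold if and only if the subspaces $\overleftarrow{\iota}^*\mathbf H_+,\overleftarrow{\iota}^*\mathbf H_-,\overleftarrow{\iota}^*\overline{\mathbf H}_+,\overleftarrow{\iota}^*\overline{\mathbf H}_-$ give a decomposition $$\mathbf T^cN=\overleftarrow{\iota}^*\mathbf H_+\oplus\overleftarrow{\iota}^*\mathbf H_-\oplus\overleftarrow{\iota}^*\overline{\mathbf H}_+\oplus\overleftarrow{\iota}^*\overline{\mathbf H}_-$$ which defines a generalized almost para-Hermitian structure on $N$ (i.e. $\overleftarrow{\iota}^*\mathbf H_\pm\oplus\overleftarrow{\iota}^*\overline{\mathbf H}_\pm$ are the $\pm1$-eigenbundles of a generalized almost paracomplex structure $\mathcal F_N$ and $\overleftarrow{\iota}^*\mathbf H_+\oplus\overleftarrow{\iota}^*\overline{\mathbf H}_-$ is the $i$-eigenbundle of a generalized almost complex structure $\mathcal J_N$, with $(\mathcal F_N,\mathcal J_N)$ generalized almost para-Hermitian). In this case the structure so defined is the one whose associated triple is $(\iota^*\gamma,\iota^*\psi,F|_{T^cN})$.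
   Context: $\mathbf TM=TM\oplus T^*M$ with pairing $g((X,\alpha),(Y,\beta))=\frac12(\alpha(Y)+\beta(X))$; superscript $c$ = complexification, bar = conjugation. A generalized almost para-Hermitian structure is a commuting pair $(\mathcal F,\mathcal J)$ with $\mathcal F^2=\mathrm{Id}$, $\mathcal J^2=-\mathrm{Id}$, both $g$-skew, and non-degenerate symmetric bivector $\gamma(\alpha,\beta)=-2g(\mathcal F(0,\alpha),\mathcal J(0,\beta))$. $\mathbf F_\pm$ are the $\pm1$-eigenbundles of $\mathcal F$, $\mathcal H=\mathcal F\mathcal J$, $\mathbf H$ its $i$-eigenbundle and $\mathbf H_\pm=\mathbf F_\pm\cap\mathbf H$. Associated triple: $\gamma$ also denotes the inverse pseudo-Riemannian metric on $TM$; with $\mathcal H(X,0)=(QX,\ast)$, $\psi(X,Y)=-\gamma(QX,Y)$; $\mathbf H=\tau(T^cM)$, $\tau(X)=(X,\psi(X,\cdot)+i\gamma(X,\cdot))$; $FX=\mathrm{pr}_{T^cM}\mathcal F(\tau X)$ (so $F^2=\mathrm{Id}$, $\gamma(FX,Y)=-\gamma(X,FY)$); every such triple determines a unique structure. A submanifold $N$ is regular invariant if $\iota^*\gamma$ is non-degenerate and $T^cN$ is $F$-invariant. Pullback: for $U\subseteq\mathbf T^c_xM$, $\overleftarrow{\iota}^*U=\{(X,\iota^*\eta):X\in T^c_xN,\ (\iota_*X,\eta)\in U\}\subseteq\mathbf T^c_xN$. *)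

(* Defs.v *)
(* Pointwise (fibrewise) linear-algebra model of the
   generalized almost para-Hermitian setting. *)
From HB Require Import structures.
From mathcomp Require Import all_boot all_order all_algebra.
Set Implicit Arguments. Unset Strict Implicit. Unset Printing Implicit Defensive.
Import Order.TTheory GRing.Theory Num.Theory.
Local Open Scope ring_scope.

(* Conventions: C is the complexification field (any numClosedFieldType,
   real elements = Num.real, conjugation = Num.conj).  T^c_xM = C^n (row
   vectors), T^*c_xM = C^n via the dual basis, and TT^c_xM = C^(n+n), an
   element (X, alpha) being the row vector row_mx X alpha.  An endomorphism A
   acts on row vectors by u |-> u *m A. *)

Section Defs.
Variable C : numClosedFieldType.

(* 2 g(u,v) = u *m pairG *m v^T *)
Definition pairG n : 'M[C]_(n + n) := block_mx 0 1%:M 1%:M 0.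

(* g-skew: g(uA, v) = - g(u, vA) *)
Definition gskew n (A : 'M[C]_(n + n)) : Prop := A *m pairG n = - (pairG n *m A^T).

Definition E1 n : 'M[C]_(n, n + n) := row_mx 1%:M 0.
Definition E2 n : 'M[C]_(n, n + n) := row_mx 0 1%:M.

(* the bivector gamma(a,b) = -2 g(F(0,a), J(0,b)) = a *m gammaB *m b^T *)
Definition gammaB n (F J : 'M[C]_(n + n)) : 'M[C]_n :=
  - (E2 n *m F *m pairG n *m (E2 n *m J)^T).

Definition gen_para_herm n (F J : 'M[C]_(n + n)) : Prop :=
  [/\ F \is a realmx, J \is a realmx, F *m F = 1%:M & J *m J = - 1%:M] /\
  [/\ gskew F, gskew J, F *m J = J *m F,
       (gammaB F J)^T = gammaB F J & gammaB F J \in unitmx].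

(* gamma as pseudo-Riemannian metric on TM: gamma(X,Y) = X *m gammaM *m Y^T *)
Definition gammaM n (F J : 'M[C]_(n + n)) : 'M[C]_n := invmx (gammaB F J).
(* H = F o J acts by u |-> u *m (J *m F); Q = first component of H(X,0) *)
Definition Qmx n (F J : 'M[C]_(n + n)) : 'M[C]_n := E1 n *m (J *m F) *m (E1 n)^T.
(* psi(X,Y) = - gamma(QX, Y) = X *m psiM *m Y^T *)
Definition psiM n (F J : 'M[C]_(n + n)) : 'M[C]_n := - (Qmx F J *m gammaM F J).
(* tau(X) = (X, psi(X,.) + i gamma(X,.)) *)
Definition tauM n (F J : 'M[C]_(n + n)) : 'M[C]_(n, n + n) :=
  row_mx 1%:M (psiM F J + 'i *: gammaM F J).
(* F X = pr_{T^cM} F(tau X) *)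
Definition Fmx n (F J : 'M[C]_(n + n)) : 'M[C]_n := tauM F J *m F *m (E1 n)^T.

Definition Hplus n (F J : 'M[C]_(n + n)) :=
  (eigenspace F 1 :&: eigenspace (J *m F) 'i)%MS.
Definition Hminus n (F J : 'M[C]_(n + n)) :=
  (eigenspace F (-1) :&: eigenspace (J *m F) 'i)%MS.
Definition cconjmx m n (A : 'M[C]_(m, n)) := map_mx (@Num.conj C) A.

(* submanifold at a point: iota_* given by X |-> X *m I, I : 'M_(k, m);
   pullback iota^* eta = eta *m I^T. *)
Definition Lmat k m (I : 'M[C]_(k, m)) : 'M[C]_(k + m, m + m) :=
  block_mx I 0 0 1%:M.                      (* (X,eta) |-> (iota_* X, eta) *)
Definition Pmat k m (I : 'M[C]_(k, m)) : 'M[C]_(k + m, k + k) :=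
  block_mx 1%:M 0 0 I^T.                    (* (X,eta) |-> (X, iota^* eta) *)
(* pullback of U: { (X, iota^* eta) : (iota_* X, eta) in U } *)
Definition pullback k m (I : 'M[C]_(k, m)) r (U : 'M[C]_(r, m + m)) :
  'M[C]_(k + m, k + k) :=
  kermx (Lmat I *m cokermx U) *m Pmat I.

(* regular invariant submanifold: iota^* gamma non-degenerate and
   T^cN (row space of I) invariant under F *)
Definition regular_invariant m k (F J : 'M[C]_(m + m)) (I : 'M[C]_(k, m)) : Prop :=
  I *m gammaM F J *m I^T \in unitmx /\ (I *m Fmx F J <= I)%MS.

End Defs.

(* Main.v *)
Require Import Defs.
From HB Require Import structures.
From mathcomp Require Import all_boot all_order all_algebra.
From mathcomp Require Import ring zify.
Set Implicit Arguments. Unset Strict Implicit. Unset Printing Implicit Defensive.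
Import Order.TTheory GRing.Theory Num.Theory.
Local Open Scope ring_scope.

Notation cj := cconjmx.

Section Helpers.
Variable C : numClosedFieldType.

Lemma cK m n (A : 'M[C]_(m, n)) : (cj (cj A)) = A.
Proof. by apply/matrixP => i j; rewrite !mxE conjCK. Qed.
Lemma cM m n p (A : 'M[C]_(m, n)) (B : 'M_(n, p)) : (cj (A *m B)) = (cj A) *m (cj B).
Proof. exact: map_mxM. Qed.
Lemma cD m n (A B : 'M[C]_(m, n)) : (cj (A + B)) = (cj A) + (cj B).
Proof. exact: map_mxD. Qed.
Lemma cN m n (A : 'M[C]_(m, n)) : (cj (- A)) = - (cj A).
Proof. exact: map_mxN. Qed.
Lemma cZ m n a (A : 'M[C]_(m, n)) : (cj (a *: A)) = (a^*) *: (cj A).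
Proof. exact: map_mxZ. Qed.
Lemma cT m n (A : 'M[C]_(m, n)) : (cj (A^T)) = ((cj A))^T.
Proof. by rewrite /cconjmx map_trmx. Qed.
Lemma cS n a : (cj (a%:M : 'M[C]_n)) = (a^*)%:M.
Proof. exact: map_scalar_mx. Qed.
Lemma c0 m n : (cj (0 : 'M[C]_(m, n))) = 0.
Proof. exact: map_mx0. Qed.
Lemma cInv n (A : 'M[C]_n) : (cj (invmx A)) = invmx (cj A).
Proof. exact: map_invmx. Qed.
Lemma cB m1 m2 n1 n2 (A : 'M[C]_(m1, n1)) (B : 'M_(m1, n2)) (D : 'M_(m2, n1)) (E : 'M_(m2, n2)) :
  (cj (block_mx A B D E)) = block_mx (cj A) (cj B) (cj D) (cj E).
Proof. exact: map_block_mx. Qed.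
Lemma cR m n1 n2 (A : 'M[C]_(m, n1)) (B : 'M_(m, n2)) : (cj (row_mx A B)) = row_mx (cj A) (cj B).
Proof. exact: map_row_mx. Qed.

Lemma realmxP m n (A : 'M[C]_(m, n)) : reflect ((cj A) = A) (A \is a realmx).
Proof.
apply: (iffP mxOverP) => [H|H i j].
  by apply/matrixP => i j; rewrite mxE; apply/CrealP; apply: H.
by apply/CrealP; rewrite -{2}H mxE.
Qed.

Lemma csub m1 m2 n (A : 'M[C]_(m1, n)) (B : 'M_(m2, n)) : ((cj A) <= (cj B))%MS = (A <= B)%MS.
Proof. exact: map_submx. Qed.

Lemma mat_ext m n (A B : 'M[C]_(m, n)) : (forall v : 'rV_m, v *m A = v *m B) -> A = B.
Proof.
move=> H; apply/row_matrixP => i.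
by rewrite -[A]mul1mx -[B]mul1mx !row_mul H.
Qed.

Lemma eqmx_vec m1 m2 n (A : 'M[C]_(m1, n)) (B : 'M_(m2, n)) :
  (forall v : 'rV_n, (v <= A)%MS <-> (v <= B)%MS) -> (A == B)%MS.
Proof.
move=> H; apply/andP; split; apply/row_subP => i; apply/H; exact: row_sub.
Qed.

Lemma addsP m1 m2 n (A : 'M[C]_(m1, n)) (B : 'M_(m2, n)) (v : 'rV_n) :
  (v <= A + B)%MS <-> exists v1 v2, [/\ (v1 <= A)%MS, (v2 <= B)%MS & v = v1 + v2].
Proof.
split.
  by case/sub_addsmxP => u ->; exists (u.1 *m A), (u.2 *m B); rewrite !submxMl.
by case=> v1 [v2 [h1 h2 ->]]; rewrite addmx_sub_adds.
Qed.

End Helpers.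
Section Blocks.
Variable C : numClosedFieldType.
Variable n : nat.
Implicit Types (a b d e g h f: 'M[C]_n).

Lemma E1B m (A B : 'M[C]_(n, m)) D E : E1 C n *m block_mx A B D E = row_mx A B.
Proof. by rewrite /E1 mul_row_block !mul1mx !mul0mx !addr0. Qed.
Lemma E2B m (A B : 'M[C]_(n, m)) D E : E2 C n *m block_mx D E A B = row_mx A B.
Proof. by rewrite /E2 mul_row_block !mul1mx !mul0mx !add0r. Qed.
Lemma rowE1T m (A B : 'M[C]_(m, n)) : row_mx A B *m (E1 C n)^T = A.
Proof. by rewrite /E1 tr_row_mx mul_row_col trmx1 trmx0 mulmx1 mulmx0 addr0. Qed.
Lemma rowE2T m (A B : 'M[C]_(m, n)) : row_mx A B *m (E2 C n)^T = B.
Proof. by rewrite /E2 tr_row_mx mul_row_col trmx1 trmx0 mulmx1 mulmx0 add0r. Qed.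
Lemma rowPair m (A B : 'M[C]_(m, n)) : row_mx A B *m pairG C n = row_mx B A.
Proof. by rewrite /pairG mul_row_block !mulmx0 !mulmx1 add0r addr0. Qed.
Lemma blockPair (A B D E : 'M[C]_n) : block_mx A B D E *m pairG C n = block_mx B A E D.
Proof. by rewrite /pairG mulmx_block !mulmx0 !mulmx1 !add0r !addr0. Qed.
Lemma pairBlock (A B D E : 'M[C]_n) : pairG C n *m block_mx A B D E = block_mx D E A B.
Proof. by rewrite /pairG mulmx_block !mul0mx !mul1mx !add0r !addr0. Qed.
Lemma pairTr : (pairG C n)^T = pairG C n.
Proof. by rewrite /pairG tr_block_mx !trmx0 trmx1. Qed.
Lemma pairPair : pairG C n *m pairG C n = 1%:M.
Proof. by rewrite {2}/pairG pairBlock -scalar_mx_block. Qed.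

Lemma ulE (X : 'M[C]_(n + n)) : E1 C n *m X *m (E1 C n)^T = ulsubmx X.
Proof. by rewrite -[X]submxK E1B rowE1T block_mxKul. Qed.
Lemma dlE (X : 'M[C]_(n + n)) : E2 C n *m X *m pairG C n *m (E2 C n)^T = dlsubmx X.
Proof. by rewrite -[X]submxK E2B rowPair rowE2T block_mxKdl. Qed.

Definition Dg (d1 d2 : 'M[C]_n) : 'M_(n + n) := block_mx d1 0 0 d2.
Lemma DgM d1 d2 e1 e2 : Dg d1 d2 *m Dg e1 e2 = Dg (d1 *m e1) (d2 *m e2).
Proof. by rewrite /Dg mulmx_block !mulmx0 !mul0mx !addr0 !add0r. Qed.
Lemma rowDg m (x y : 'M[C]_(m, n)) d1 d2 : row_mx x y *m Dg d1 d2 = row_mx (x *m d1) (y *m d2).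
Proof. by rewrite /Dg mul_row_block !mulmx0 addr0 add0r. Qed.
Lemma SwDg d1 d2 : pairG C n *m Dg d1 d2 *m pairG C n = Dg d2 d1.
Proof. by rewrite /Dg pairBlock blockPair. Qed.
Lemma Dg11 : Dg 1%:M 1%:M = 1%:M.
Proof. by rewrite /Dg -scalar_mx_block. Qed.
Lemma DgT d1 d2 : (Dg d1 d2)^T = Dg d1^T d2^T.
Proof. by rewrite /Dg tr_block_mx !trmx0. Qed.
Lemma cDg d1 d2 : cconjmx (Dg d1 d2) = Dg (cconjmx d1) (cconjmx d2).
Proof. by rewrite /Dg /cconjmx map_block_mx !map_mx0. Qed.

Definition ZP a g := a + 'i *: g.
Definition ZM a g := a - 'i *: g.
Definition Pm a g : 'M[C]_(n + n) := block_mx 1%:M (ZP a g) 1%:M (ZM a g).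
Definition Tm a g : 'M[C]_(n + n) := block_mx 1%:M a 0 g.
Definition Tinv a g : 'M[C]_(n + n) := block_mx 1%:M (- (a *m invmx g)) 0 (invmx g).
Definition Um : 'M[C]_(n + n) := block_mx 1%:M ('i%:M) 1%:M ((- 'i)%:M).
Definition Uinv : 'M[C]_(n + n) :=
  block_mx ((2^-1)%:M) ((2^-1)%:M) ((- ('i / 2))%:M) (('i / 2)%:M).
Definition Pinv a g := locked (Tinv a g *m Uinv).
Definition Kmx : 'M[C]_(n + n) := block_mx 0 (- 1%:M) 1%:M 0.
Definition Di : 'M[C]_(n + n) := Dg ('i%:M) ((- 'i)%:M).

Lemma two_neq0 : (2 : C) != 0.
Proof. by rewrite pnatr_eq0. Qed.

Lemma scE (x y : C) : x = y -> (x%:M : 'M[C]_n) = y%:M.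
Proof. by move->. Qed.

Lemma UUinv : Um *m Uinv = 1%:M.
Proof.
rewrite /Um /Uinv mulmx_block -!scalar_mxM -!raddfD /= scalar_mx_block.
have h2 := two_neq0.
have hi : 'i * 'i = -1 :> C by rewrite mulCii.
congr block_mx.
all: try rewrite -(raddf0 (@scalar_mx C n)).
all: apply: scE.
all: rewrite ?mulrN ?mulNr ?opprK mulrA hi; field; done.
Qed.
Lemma UinvU : Uinv *m Um = 1%:M.
Proof. exact: mulmx1C UUinv. Qed.

Lemma TTinv a g : g \in unitmx -> Tm a g *m Tinv a g = 1%:M.
Proof.
move=> gu; rewrite /Tm /Tinv mulmx_block !mul1mx !mulmx0 !mul0mx !addr0 !add0r.
by rewrite addNr mulmxV // -scalar_mx_block.
Qed.
Lemma TinvT a g : g \in unitmx -> Tinv a g *m Tm a g = 1%:M.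
Proof. by move=> gu; apply: mulmx1C; apply: TTinv. Qed.

Lemma PmE a g : Um *m Tm a g = Pm a g.
Proof.
rewrite /Um /Tm /Pm /ZP /ZM mulmx_block !mul1mx !mulmx0 !addr0 !mul_scalar_mx.
by rewrite scaleNr.
Qed.

Lemma PPinv a g : g \in unitmx -> Pm a g *m Pinv a g = 1%:M.
Proof.
move=> gu; rewrite -PmE /Pinv -lock mulmxA -(mulmxA Um) TTinv // mulmx1 UUinv //.
Qed.
Lemma PinvP a g : g \in unitmx -> Pinv a g *m Pm a g = 1%:M.
Proof. by move=> gu; apply: mulmx1C; apply: PPinv. Qed.

Lemma UK : Um *m Kmx = Di *m Um.
Proof.
rewrite /Um /Kmx /Di /Dg !mulmx_block !mulmx0 !mul0mx !mulmx1 !addr0 !add0r.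
rewrite !mulmxN !mulmx1 -!scalar_mxM.
have hi : 'i * 'i = -1 :> C by rewrite mulCii.
congr block_mx; rewrite ?raddfN //= ?mulrNN hi raddfN //.
Qed.

Lemma MH_TKT a g : Pinv a g *m Di *m Pm a g = Tinv a g *m Kmx *m Tm a g.
Proof.
rewrite -PmE /Pinv -lock !mulmxA -(mulmxA _ Uinv) -(mulmxA _ (Uinv *m Di)) -(mulmxA Uinv).
by rewrite -UK (mulmxA Uinv) UinvU mul1mx.
Qed.

Lemma TKT_ul a g : ulsubmx (Tinv a g *m Kmx *m Tm a g) = - (a *m invmx g).
Proof.
rewrite /Tinv /Kmx /Tm !mulmx_block block_mxKul.
by rewrite ?mul0mx ?mulmx0 ?mul1mx ?mulmx1 ?add0r ?addr0 ?mulNmx //.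
Qed.
Lemma TKT_dl a g : dlsubmx (Tinv a g *m Kmx *m Tm a g) = invmx g.
Proof.
rewrite /Tinv /Kmx /Tm !mulmx_block block_mxKdl.
by rewrite ?mul0mx ?mulmx0 ?mul1mx ?mulmx1 ?add0r ?addr0.
Qed.

End Blocks.

Section More.
Variable C : numClosedFieldType.
Variable n : nat.

Lemma zI (X : 'M[C]_(n)) : (- 'i) *: X = 'i *: X -> X = 0.
Proof.
move=> h.
have : ((2 : C) * 'i) *: X = 0.
  by rewrite mulr_natl mulr2n scalerDl -{1}h scaleNr addNr.
move/eqP; rewrite scaler_eq0 mulf_eq0 (negPf (@two_neq0 C)) (negPf (@neq0Ci C)) /=.
by move/eqP.
Qed.

Lemma scaleI (c : C) m p (X Y : 'M[C]_(m, p)) : c != 0 -> c *: X = c *: Y -> X = Y.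
Proof.
move=> cn h; by rewrite -[X]scale1r -[Y]scale1r -(mulVf cn) -!scalerA h.
Qed.

Lemma two_i_neq0 : ('i *+ 2 : C) != 0.
Proof. by rewrite -mulr_natl mulf_eq0 (negPf (@two_neq0 C)) (negPf (@neq0Ci C)). Qed.

End More.


Section Model.
Variable C : numClosedFieldType.
Variable n : nat.
Implicit Types (a b d e g h f: 'M[C]_n).

Lemma cZP a g : (cj a) = a -> (cj g) = g -> (cj (ZP a g)) = ZM a g.
Proof. by move=> ar gr; rewrite /ZP /ZM cD cZ ar gr conjCi scaleNr. Qed.
Lemma cZM a g : (cj a) = a -> (cj g) = g -> (cj (ZM a g)) = ZP a g.
Proof. by move=> ar gr; rewrite /ZP /ZM cD cN cZ ar gr conjCi scaleNr opprK. Qed.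

Lemma cPm a g : (cj a) = a -> (cj g) = g -> (cj (Pm a g)) = pairG C n *m Pm a g.
Proof. by move=> ar gr; rewrite /Pm cB cS conjC1 cZP // cZM // pairBlock. Qed.

Lemma cPinv a g : (cj a) = a -> (cj g) = g -> g \in unitmx ->
  (cj (Pinv a g)) = Pinv a g *m pairG C n.
Proof.
move=> ar gr gu.
have h1 : pairG C n *m Pm a g *m (cj (Pinv a g)) = 1%:M.
  by rewrite -cPm // -cM PPinv // cS conjC1.
rewrite -[(cj (Pinv a g))]mul1mx -(PinvP a gu) -[Pm a g]mul1mx -pairPair.
by rewrite !mulmxA -(mulmxA _ (pairG C n)) -(mulmxA _ _ (cj (Pinv a g))) -mulmxA h1 mulmx1.
Qed.

Lemma MgE a g : a^T = - a -> g^T = g ->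
  Pm a g *m pairG C n *m (Pm a g)^T = Dg (('i *+ 2) *: g) (- (('i *+ 2) *: g)).
Proof.
move=> aT gT; rewrite /Pm /Dg blockPair tr_block_mx trmx1 mulmx_block.
rewrite !mulmx1 !mul1mx /ZP /ZM !raddfD /= !raddfN /= !linearZ /= aT gT.
congr block_mx; apply/matrixP => i j; rewrite !mxE; ring.
Qed.

Lemma eigD (P Pi : 'M[C]_(n + n)) d1 d2 (l : C) (v : 'rV_(n + n)) :
  P *m Pi = 1%:M -> Pi *m P = 1%:M ->
  (v <= eigenspace (Pi *m Dg d1 d2 *m P) l)%MS <->
  exists x y, [/\ x *m d1 = l *: x, y *m d2 = l *: y & v = row_mx x y *m P].
Proof.
move=> PPi PiP; split.
  move/eigenspaceP => hv.
  have hw : v *m Pi *m Dg d1 d2 = l *: (v *m Pi).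
    have := congr1 (mulmx^~ Pi) hv; rewrite /= -!mulmxA PPi mulmx1 !mulmxA.
    by rewrite scalemxAl.
  set x := lsubmx (v *m Pi); set y := rsubmx (v *m Pi).
  have wE : v *m Pi = row_mx x y by rewrite hsubmxK.
  move: hw; rewrite wE rowDg scale_row_mx; case/eq_row_mx => hx hy.
  exists x, y; split => //; by rewrite -wE -mulmxA PiP mulmx1.
case=> x [y [hx hy ->]]; apply/eigenspaceP.
rewrite !mulmxA -(mulmxA _ P) PPi mulmx1 rowDg hx hy -scale_row_mx.
by rewrite scalemxAl.
Qed.

Lemma conjDM (P Pi A B : 'M[C]_(n + n)) : P *m Pi = 1%:M ->
  (Pi *m A *m P) *m (Pi *m B *m P) = Pi *m (A *m B) *m P.
Proof.
by move=> PPi; rewrite !mulmxA -(mulmxA _ P) PPi mulmx1.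
Qed.

Lemma skewFwd (P Pi D X : 'M[C]_(n + n)) (s : C) :
  P *m Pi = 1%:M -> Pi *m P = 1%:M -> X = Pi *m D *m P ->
  X *m pairG C n = s *: (pairG C n *m X^T) ->
  D *m (P *m pairG C n *m P^T) = s *: (P *m pairG C n *m P^T *m D^T).
Proof.
move=> PPi PiP hXd hX.
have PX : P *m X = D *m P by rewrite hXd !mulmxA PPi mul1mx.
have e1 : D *m (P *m pairG C n *m P^T) = P *m (X *m pairG C n) *m P^T.
  by rewrite !mulmxA -PX.
rewrite e1 hX -scalemxAr -scalemxAl; congr (_ *: _).
by rewrite -!mulmxA -trmx_mul PX trmx_mul !mulmxA.
Qed.

Lemma skewBwd (P Pi D X : 'M[C]_(n + n)) (s : C) :
  P *m Pi = 1%:M -> Pi *m P = 1%:M -> X = Pi *m D *m P ->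
  D *m (P *m pairG C n *m P^T) = s *: (P *m pairG C n *m P^T *m D^T) ->
  X *m pairG C n = s *: (pairG C n *m X^T).
Proof.
move=> PPi PiP -> hD.
have PiT : P^T *m Pi^T = 1%:M by rewrite -trmx_mul PiP trmx1.
have -> : Pi *m D *m P *m pairG C n = Pi *m (D *m (P *m pairG C n *m P^T)) *m Pi^T.
  by rewrite !mulmxA -(mulmxA _ P^T) PiT mulmx1.
rewrite hD -scalemxAr -scalemxAl; congr (_ *: _).
by rewrite !trmx_mul !mulmxA PiP mul1mx.
Qed.

End Model.


Section NF.
Variable C : numClosedFieldType.
Variable n : nat.
Variables F J : 'M[C]_(n + n).
Hypothesis hyp : gen_para_herm F J.

Local Notation pG := (pairG C n).

Let Fr : cj F = F. Proof. by case: hyp => [[/realmxP]]. Qed.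
Let Jr : cj J = J. Proof. by case: hyp => [[_ /realmxP]]. Qed.
Let FF : F *m F = 1%:M. Proof. by case: hyp => [[]]. Qed.
Let JJ : J *m J = - 1%:M. Proof. by case: hyp => [[]]. Qed.
Let Fs : F *m pG = - (pG *m F^T). Proof. by case: hyp => [_ []]. Qed.
Let Js : J *m pG = - (pG *m J^T). Proof. by case: hyp => [_ []]. Qed.
Let FJ : F *m J = J *m F. Proof. by case: hyp => [_ []]. Qed.
Let gsym : (gammaB F J)^T = gammaB F J. Proof. by case: hyp => [_ []]. Qed.
Let gunit : gammaB F J \in unitmx. Proof. by case: hyp => [_ []]. Qed.

Let H := J *m F.
Let HH : H *m H = - 1%:M.
Proof.
rewrite /H -mulmxA (mulmxA F J F) FJ !mulmxA JJ mulNmx mul1mx mulNmx FF //.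
Qed.
Let Hsym : H *m pG = pG *m H^T.
Proof.
by rewrite /H -mulmxA Fs mulmxN mulmxA Js mulNmx opprK -mulmxA -trmx_mul FJ.
Qed.
Let gB : gammaB F J = dlsubmx H.
Proof.
have e : F *m pG *m J^T = - (H *m pG).
  by rewrite Fs mulNmx -mulmxA -trmx_mul -Hsym.
rewrite /gammaB trmx_mul.
have -> : E2 C n *m F *m pG *m (J^T *m (E2 C n)^T) = E2 C n *m (F *m pG *m J^T) *m (E2 C n)^T.
  by rewrite !mulmxA.
by rewrite e mulmxN mulNmx opprK mulmxA dlE.
Qed.

Let Q := ulsubmx H.
Let S := ursubmx H.
Let G := dlsubmx H.
Let R := drsubmx H.
Let HE : H = block_mx Q S G R. Proof. by rewrite submxK. Qed.
Let Gu : G \in unitmx. Proof. by rewrite /G -gB. Qed.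
Let Gsym : G^T = G. Proof. by rewrite /G -gB. Qed.

Let g := invmx G.
Let a := - (Q *m g).
Let gG : g *m G = 1%:M. Proof. exact: mulVmx. Qed.
Let Gg : G *m g = 1%:M. Proof. exact: mulmxV. Qed.

Let eqs : [/\ Q *m Q + S *m G = - 1%:M, G *m Q + R *m G = 0 & Q = R^T].
Proof.
have h1 := HH; rewrite HE mulmx_block scalar_mx_block opp_block_mx oppr0 in h1.
have h2 := Hsym; rewrite HE blockPair tr_block_mx pairBlock in h2.
case/eq_block_mx: h1 => e1 _ e3 _; case/eq_block_mx: h2 => _ e _ _.
by split.
Qed.

Let TH : Tm a g *m H = Kmx C n *m Tm a g.
Proof.
case: eqs => e1 e3 eT.
have r1 : Q + a *m G = 0 by rewrite /a mulNmx -mulmxA gG mulmx1 subrr.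
have RG : R *m G = - (G *m Q) by apply/eqP; rewrite -addr_eq0 addrC e3.
have r4 : g *m R = a.
  have -> : g *m R = g *m (R *m G) *m g by rewrite -!mulmxA Gg mulmx1.
  by rewrite RG mulmxN mulNmx mulmxA gG mul1mx.
have SG : S *m G = - 1%:M - Q *m Q by rewrite -e1 addrAC subrr add0r.
have r2 : S + a *m R = - g.
  have Sg : S = S *m G *m g by rewrite -mulmxA Gg mulmx1.
  rewrite {1}Sg SG mulmxBl mulNmx mul1mx /a mulNmx -(mulmxA Q g R) r4 /a mulmxN opprK.
  by rewrite mulmxA subrK.
rewrite HE /Tm /Kmx !mulmx_block !mul1mx !mul0mx !mulmx0 !add0r !addr0 r1 r2 gG r4.
by rewrite mulNmx mul1mx.
Qed.

Let gu : g \in unitmx. Proof. by rewrite unitmx_inv. Qed.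

Let HD : H = Pinv a g *m Di C n *m Pm a g.
Proof.
by rewrite MH_TKT -mulmxA -TH mulmxA TinvT // mul1mx.
Qed.

Let Hr : cj H = H. Proof. by rewrite /H cM Jr Fr. Qed.
Let QGr : cj Q = Q /\ cj G = G.
Proof. by have := Hr; rewrite HE cB => /eq_block_mx [-> _ -> _]. Qed.
Let gr : cj g = g. Proof. by rewrite /g cInv (proj2 QGr). Qed.
Let ar : cj a = a. Proof. by rewrite /a cN cM gr (proj1 QGr). Qed.
Let gT : g^T = g. Proof. by rewrite /g trmx_inv Gsym. Qed.
Let aT : a^T = - a.
Proof.
case: eqs => _ e3 eT.
have RG : R *m G = - (G *m Q) by apply/eqP; rewrite -addr_eq0 addrC e3.
have r4 : g *m R = a.
  have -> : g *m R = g *m (R *m G) *m g by rewrite -!mulmxA Gg mulmx1.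
  by rewrite RG mulmxN mulNmx mulmxA gG mul1mx.
by rewrite {1}/a raddfN /= trmx_mul gT {1}eT trmxK r4.
Qed.

Let P := Pm a g.
Let Pi := Pinv a g.
Let PPi : P *m Pi = 1%:M. Proof. exact: PPinv. Qed.
Let PiP : Pi *m P = 1%:M. Proof. exact: PinvP. Qed.

Let F' := P *m F *m Pi.
Let FD : F' *m Di C n = Di C n *m F'.
Proof.
have DiE : Di C n = P *m H *m Pi.
  by rewrite HD !mulmxA PPi mul1mx -mulmxA PPi mulmx1.
have FH : F *m H = H *m F by rewrite /H mulmxA FJ.
by rewrite DiE /F' !(conjDM _ _ PiP) FH.
Qed.

Let X1 := ulsubmx F'.
Let X2 := ursubmx F'.
Let X3 := dlsubmx F'.
Let X4 := drsubmx F'.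
Let F'E : F' = block_mx X1 X2 X3 X4. Proof. by rewrite submxK. Qed.

Let X23 : X2 = 0 /\ X3 = 0.
Proof.
have := FD; rewrite F'E /Di /Dg !mulmx_block !mulmx0 !mul0mx !addr0 !add0r.
rewrite !mul_mx_scalar !mul_scalar_mx.
case/eq_block_mx => _ e2 e3 _.
by split; apply: zI.
Qed.

Let PF : P *m F = F' *m P.
Proof. by rewrite /F' -!mulmxA PiP mulmx1. Qed.

Let X1E : X1 = Fmx F J.
Proof.
have tE : tauM F J = E1 C n *m P.
  by rewrite /P /Pm E1B /tauM /ZP /psiM /gammaM /Qmx ulE gB.
rewrite /Fmx tE -(mulmxA (E1 C n) P F) PF mulmxA F'E E1B (proj1 X23) /P /Pm mul_row_block rowE1T.
by rewrite mulmx1 mul0mx addr0.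
Qed.

Let X4E : X4 = cj X1.
Proof.
have : cj F' = pG *m F' *m pG.
  rewrite /F' !cM Fr cPm // cPinv // !mulmxA //.
rewrite {1}F'E F'E cB pairBlock blockPair.
by case/eq_block_mx => -> _ _ _.
Qed.

Lemma NF_main :
  [/\ cj (gammaM F J) = gammaM F J, (gammaM F J)^T = gammaM F J,
      gammaM F J \in unitmx, cj (psiM F J) = psiM F J & (psiM F J)^T = - psiM F J] /\
  [/\ F = Pinv (psiM F J) (gammaM F J) *m Dg (Fmx F J) (cj (Fmx F J)) *m
          Pm (psiM F J) (gammaM F J) &
      J *m F = Pinv (psiM F J) (gammaM F J) *m Di C n *m Pm (psiM F J) (gammaM F J)].
Proof.
have gE : gammaM F J = g by rewrite /gammaM gB.
have aE : psiM F J = a by rewrite /psiM /Qmx ulE gE.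
rewrite gE aE; split; first by split.
split; last exact: HD.
have DgE : Dg X1 X4 = F' by rewrite F'E /Dg (proj1 X23) (proj2 X23).
rewrite -X1E -X4E DgE /F' -/P -/Pi.
by rewrite !mulmxA PiP mul1mx -mulmxA PiP mulmx1.
Qed.

End NF.

Lemma NF_f (C : numClosedFieldType) n (F J : 'M[C]_(n + n)) : gen_para_herm F J ->
  Fmx F J *m Fmx F J = 1%:M /\ Fmx F J *m gammaM F J = - (gammaM F J *m (Fmx F J)^T).
Proof.
move=> hyp; have [[_ gT gu _ aT] [FE _]] := NF_main hyp.
case: hyp => [[_ _ FF _] [Fs _ _ _ _]].
set f := Fmx F J in FE *; set g := gammaM F J in FE gT gu *.
set a := psiM F J in FE aT *.
have PPi := PPinv a gu; have PiP := PinvP a gu.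
split.
  have : Dg f (cj f) *m Dg f (cj f) = 1%:M.
    have -> : Dg f (cj f) *m Dg f (cj f) = Pm a g *m (F *m F) *m Pinv a g.
      by rewrite FE conjDM // !mulmxA PPi mul1mx -mulmxA PPi mulmx1.
    by rewrite FF mulmx1 PPi.
  by rewrite DgM -Dg11 => /eq_block_mx [].
have hs : F *m pairG C n = (-1) *: (pairG C n *m F^T) by rewrite scaleN1r.
have := skewFwd PPi PiP FE hs; rewrite MgE // DgT !DgM /Dg scale_block_mx.
case/eq_block_mx => e _ _ _.
apply: (@scaleI _ ('i *+ 2)); first exact: two_i_neq0.
by rewrite scalemxAr e -scalemxAl scalerA mulN1r scaleNr scalerN.
Qed.


Lemma gammaB_gen (C : numClosedFieldType) n (F J : 'M[C]_(n + n)) :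
  gskew F -> (J *m F) *m pairG C n = pairG C n *m (J *m F)^T ->
  gammaB F J = dlsubmx (J *m F).
Proof.
move=> Fs Hsym.
have e : F *m pairG C n *m J^T = - ((J *m F) *m pairG C n).
  by rewrite Fs mulNmx -(mulmxA (pairG C n)) -trmx_mul -Hsym.
rewrite /gammaB trmx_mul.
have -> : E2 C n *m F *m pairG C n *m (J^T *m (E2 C n)^T) =
          E2 C n *m (F *m pairG C n *m J^T) *m (E2 C n)^T by rewrite !mulmxA.
by rewrite e mulmxN mulNmx opprK mulmxA dlE.
Qed.

Section ModelN.
Variable C : numClosedFieldType.
Variable n : nat.
Variables a g f : 'M[C]_n.
Hypotheses (gr : cj g = g) (gT : g^T = g) (gu : g \in unitmx)
  (ar : cj a = a) (aT : a^T = - a) (ff : f *m f = 1%:M) (fg : f *m g = - (g *m f^T)).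

Local Notation pG := (pairG C n).
Definition MF := Pinv a g *m Dg f (cj f) *m Pm a g.
Definition MH := Pinv a g *m Di C n *m Pm a g.
Definition MJ := MF *m MH.

Let P := Pm a g.
Let Pi := Pinv a g.
Let PPi : P *m Pi = 1%:M. Proof. exact: PPinv. Qed.
Let PiP : Pi *m P = 1%:M. Proof. exact: PinvP. Qed.

Let MFr : cj MF = MF.
Proof.
rewrite /MF !cM cPm // cPinv // cDg cK -!mulmxA (mulmxA pG) (mulmxA _ pG).
by rewrite SwDg.
Qed.
Let MHr : cj MH = MH.
Proof.
have cNi : (- 'i : C)^* = 'i by rewrite -(conjCi C) conjCK.
rewrite /MH !cM cPm // cPinv // /Di cDg !cS (conjCi C) cNi.
by rewrite -!mulmxA (mulmxA pG) (mulmxA _ pG) SwDg.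
Qed.
Let MFF : MF *m MF = 1%:M.
Proof.
rewrite /MF conjDM // DgM ff -cM ff cS conjC1 Dg11 mulmx1 PiP //.
Qed.
Let DiDi : Di C n *m Di C n = - 1%:M.
Proof.
rewrite /Di DgM -!scalar_mxM mulrNN mulCii /Dg scalar_mx_block opp_block_mx oppr0.
by rewrite raddfN.
Qed.
Let MHH : MH *m MH = - 1%:M.
Proof. by rewrite /MH conjDM // DiDi mulmxN mulNmx mulmx1 PiP. Qed.
Let comm : MF *m MH = MH *m MF.
Proof.
rewrite /MF /MH !conjDM // /Di !DgM.
by rewrite !(scalar_mxC _ f) !(scalar_mxC _ (cj f)).
Qed.
Let MJJ : MJ *m MJ = - 1%:M.
Proof.
by rewrite /MJ -(mulmxA MF MH) (mulmxA MH MF MH) -comm -(mulmxA MF MH MH) (mulmxA MF MF) MFF MHH mul1mx.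
Qed.
Let MFs : MF *m pG = - (pG *m MF^T).
Proof.
rewrite -scaleN1r; apply: (skewBwd PPi PiP (erefl _)).
rewrite MgE // DgT !DgM /Dg scale_block_mx !scaler0.
have fg' : cj f *m g = - (g *m (cj f)^T).
  by rewrite -gr -cM fg cN cM cT gr.
congr block_mx; rewrite ?scaleN1r.
- by rewrite -scalemxAr fg -scalemxAl scalerN.
- by rewrite mulmxN mulNmx -scalemxAr -scalemxAl fg' scalerN.
Qed.
Let MHs : MH *m pG = pG *m MH^T.
Proof.
rewrite -[pG *m MH^T]scale1r; apply: (skewBwd PPi PiP (erefl _)).
rewrite MgE // /Di DgT !DgM scale1r !tr_scalar_mx.
by rewrite !mul_mx_scalar !mul_scalar_mx.
Qed.
Let MJF : MJ *m MF = MH.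
Proof. by rewrite /MJ -(mulmxA MF MH MF) -comm (mulmxA MF MF MH) MFF mul1mx. Qed.
Let MJs : MJ *m pG = - (pG *m MJ^T).
Proof.
rewrite /MJ -mulmxA MHs mulmxA MFs mulNmx -mulmxA -trmx_mul comm //.
Qed.
Let MJc : MF *m MJ = MJ *m MF.
Proof. by rewrite MJF /MJ (mulmxA MF MF MH) MFF mul1mx. Qed.
Let gB : gammaB MF MJ = invmx g.
Proof.
rewrite gammaB_gen //; last by rewrite MJF.
by rewrite MJF /MH MH_TKT TKT_dl.
Qed.

Lemma model_para : gen_para_herm MF MJ.
Proof.
split; split => //; try exact/realmxP.
- by apply/realmxP; rewrite /MJ cM MFr MHr.
- by rewrite gB trmx_inv gT.
- by rewrite gB unitmx_inv.
Qed.

Lemma model_gamma : gammaM MF MJ = g.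
Proof. by rewrite /gammaM gB invmxK. Qed.

Lemma model_psi : psiM MF MJ = a.
Proof.
rewrite /psiM /Qmx model_gamma ulE MJF /MH MH_TKT TKT_ul mulNmx opprK.
exact: mulmxKV.
Qed.

Lemma model_F : Fmx MF MJ = f.
Proof.
have tE : tauM MF MJ = E1 C n *m P by rewrite /tauM model_psi model_gamma /P /Pm E1B.
rewrite /Fmx tE /MF -/P -/Pi !mulmxA -(mulmxA _ P Pi) PPi mulmx1 /Dg E1B /P /Pm.
by rewrite mul_row_block rowE1T mulmx1 mul0mx addr0.
Qed.

Lemma model_eig (l : C) (v : 'rV_(n + n)) :
  (v <= eigenspace MF l)%MS <->
  exists x y, [/\ x *m f = l *: x, y *m cj f = l *: y & v = row_mx x y *m Pm a g].
Proof. exact: eigD. Qed.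

Lemma model_eigJ (v : 'rV_(n + n)) :
  (v <= eigenspace MJ 'i)%MS <->
  exists x y, [/\ x *m f = x, y *m cj f = - y & v = row_mx x y *m Pm a g].
Proof.
have -> : MJ = Pi *m Dg (f *m 'i%:M) (cj f *m (- 'i)%:M) *m P.
  by rewrite /MJ /MF /MH conjDM // /Di DgM.
rewrite eigD //; split; case=> x [y [hx hy ->]]; exists x, y; split => //.
- by move: hx; rewrite mulmxA mul_mx_scalar; apply: scaleI (neq0Ci C).
- move: hy; rewrite mulmxA mul_mx_scalar scaleNr -scalerN => /(scaleI (neq0Ci C)) h.
  by rewrite -[in RHS]h opprK.
- by rewrite mulmxA hx mul_mx_scalar.
- by rewrite mulmxA hy mul_mx_scalar scalerN scaleNr opprK.
Qed.

End ModelN.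


Section Pull.
Variable C : numClosedFieldType.

Lemma zI' m p (X : 'M[C]_(m, p)) : (- 'i) *: X = 'i *: X -> X = 0.
Proof.
move=> h.
have : ((2 : C) * 'i) *: X = 0.
  by rewrite mulr_natl mulr2n scalerDl -{1}h scaleNr addNr.
move/eqP; rewrite scaler_eq0 mulf_eq0 (negPf (@two_neq0 C)) (negPf (@neq0Ci C)) /=.
by move/eqP.
Qed.

Lemma pull_char k m (I : 'M[C]_(k, m)) r (U : 'M_(r, m + m)) (v : 'rV_(k + k)) :
  (v <= pullback I U)%MS <->
  exists (X : 'rV_k) (e : 'rV_m), (row_mx (X *m I) e <= U)%MS /\ v = row_mx X (e *m I^T).
Proof.
rewrite /pullback; split.
  case/submxP => D ->.
  set w := D *m kermx (Lmat I *m cokermx U).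
  have : (w <= kermx (Lmat I *m cokermx U))%MS by exact: submxMl.
  move/sub_kermxP; rewrite (mulmxA w) => /eqP; rewrite -submxE => hw.
  exists (lsubmx w), (rsubmx w); split.
    by move: hw; rewrite -{1}[w]hsubmxK /Lmat mul_row_block !mulmx0 addr0 add0r mulmx1.
  by rewrite mulmxA -/w -{1}[w]hsubmxK /Pmat mul_row_block !mulmx0 addr0 add0r mulmx1.
case=> X [e [hU ->]].
set w := row_mx X e.
have hw : (w <= kermx (Lmat I *m cokermx U))%MS.
  apply/sub_kermxP; rewrite (mulmxA w); apply/eqP; rewrite -submxE.
  by rewrite /w /Lmat mul_row_block !mulmx0 addr0 add0r mulmx1.
have -> : row_mx X (e *m I^T) = w *m Pmat I.
  by rewrite /w /Pmat mul_row_block !mulmx0 addr0 add0r mulmx1.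
by apply: submxMr.
Qed.

Lemma pull_graph k m (I : 'M[C]_(k, m)) r (U : 'M_(r, m + m)) (h Z : 'M_m) (l : C) :
  (forall u : 'rV_(m + m), (u <= U)%MS <-> exists x, x *m h = l *: x /\ u = row_mx x (x *m Z)) ->
  forall v, (v <= pullback I U)%MS <->
    exists X : 'rV_k, X *m I *m h = l *: (X *m I) /\ v = row_mx X (X *m (I *m Z *m I^T)).
Proof.
move=> hU v; rewrite pull_char; split.
  case=> X [e [/hU [x [hx /eq_row_mx [ex ee]]] ->]].
  by exists X; rewrite ee !mulmxA ex hx.
case=> X [hX ->]; exists X, (X *m I *m Z); split; last by rewrite !mulmxA.
by apply/hU; exists (X *m I).
Qed.

End Pull.

Section HChar.
Variable C : numClosedFieldType.
Variable n : nat.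
Variables F J : 'M[C]_(n + n).
Hypothesis hyp : gen_para_herm F J.

Let g := gammaM F J.
Let a := psiM F J.
Let f := Fmx F J.

Lemma Hchar (l : C) (u : 'rV_(n + n)) :
  (u <= eigenspace F l :&: eigenspace (J *m F) 'i)%MS <->
  exists x, x *m f = l *: x /\ u = row_mx x (x *m ZP a g).
Proof.
have [[_ _ gu _ _] [FE HE]] := NF_main hyp.
have PPi := PPinv a gu; have PiP := PinvP a gu.
have rowP (x : 'rV_n) : row_mx x (x *m ZP a g) = row_mx x 0 *m Pm a g.
  by rewrite /Pm mul_row_block !mul0mx !addr0 mulmx1.
rewrite sub_capmx; split.
  case/andP; rewrite HE {1}FE => /eigD => /(_ PPi PiP) [x [y [hx hy hu]]].
  move/eigD => /(_ PPi PiP) [x' [y' [hx' hy' hu']]].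
  have y'0 : y' = 0 by apply: zI'; rewrite -hy' mul_mx_scalar.
  have : row_mx x y = row_mx x' y'.
    by rewrite -[row_mx x y]mulmx1 -PPi mulmxA -hu hu' -mulmxA PPi mulmx1.
  case/eq_row_mx => ex ey.
  by exists x; split => //; rewrite rowP hu ey y'0.
case=> x [hx ->]; rewrite rowP; apply/andP; split.
  rewrite {1}FE; apply/eigD => //; exists x, 0; split => //.
  by rewrite mul0mx scaler0.
rewrite HE; apply/eigD => //; exists x, 0; split => //.
- by rewrite mul_mx_scalar.
- by rewrite mul0mx scaler0.
Qed.

Lemma Hcharc (l : C) (u : 'rV_(n + n)) : l^* = l ->
  (u <= cconjmx (eigenspace F l :&: eigenspace (J *m F) 'i))%MS <->
  exists x, x *m cj f = l *: x /\ u = row_mx x (x *m ZM a g).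
Proof.
have [[gr _ _ ar _] _] := NF_main hyp.
move=> lr; rewrite -{1}[u]cK csub Hchar; split.
  case=> x [hx hu]; exists (cj x); split.
    by rewrite -cM hx cZ lr.
  by rewrite -[u]cK hu cR cM cZP.
case=> x [hx ->]; exists (cj x); split.
  by rewrite -[f]cK -cM hx cZ lr.
by rewrite cR cM cZM.
Qed.

End HChar.


Section Gen.
Variable C : numClosedFieldType.
Variable k : nat.
Implicit Types (A B : 'M[C]_k).

Lemma half2 (v : 'rV[C]_k) : 2^-1 *: (v + v) = v.
Proof.
by rewrite -{1 2}[v]scale1r -scalerDl scalerA -[1 + 1]/(2%:R) mulVf ?scale1r // two_neq0.
Qed.

Lemma inv_split A (v : 'rV_k) : A *m A = 1%:M ->
  (v <= eigenspace A 1 + eigenspace A (-1))%MS.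
Proof.
move=> AA; apply/addsP.
exists (2^-1 *: (v + v *m A)), (2^-1 *: (v - v *m A)); split.
- apply/eigenspaceP; rewrite scale1r -scalemxAl mulmxDl -mulmxA AA mulmx1 addrC //.
- apply/eigenspaceP; rewrite -scalemxAl mulmxBl -mulmxA AA mulmx1.
  by rewrite scaleN1r -scalerN opprB.
- by rewrite -scalerDr addrACA subrr addr0 half2.
Qed.

Lemma invJ_split A (v : 'rV_k) : A *m A = - 1%:M ->
  (v <= eigenspace A 'i + eigenspace A (- 'i))%MS.
Proof.
move=> AA; apply/addsP.
exists (2^-1 *: (v - 'i *: (v *m A))), (2^-1 *: (v + 'i *: (v *m A))); split.
- apply/eigenspaceP; rewrite -scalemxAl mulmxBl -scalemxAl -mulmxA AA mulmxN mulmx1.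
  rewrite [in RHS]scalerA [in RHS]mulrC -[in RHS]scalerA; congr (_ *: _).
  by rewrite scalerBr scalerA mulCii scaleN1r opprK scalerN opprK addrC.
- apply/eigenspaceP; rewrite -scalemxAl mulmxDl -scalemxAl -mulmxA AA mulmxN mulmx1.
  rewrite [in RHS]scalerA [in RHS]mulrC -[in RHS]scalerA; congr (_ *: _).
  by rewrite scalerDr scalerA mulNr mulCii opprK scale1r scalerN scaleNr addrC.
- by rewrite -scalerDr addrACA addNr addr0 half2.
Qed.

Lemma uniqF A B : A *m A = 1%:M ->
  (eigenspace A 1 <= eigenspace B 1)%MS -> (eigenspace A (-1) <= eigenspace B (-1))%MS ->
  A = B.
Proof.
move=> AA s1 s2; apply: mat_ext => v.
case/addsP: (inv_split v AA) => v1 [v2 [h1 h2 ->]].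
have h1' := submx_trans h1 s1; have h2' := submx_trans h2 s2.
move/eigenspaceP: h1 => e1; move/eigenspaceP: h2 => e2.
move/eigenspaceP: h1' => e1'; move/eigenspaceP: h2' => e2'.
by rewrite !mulmxDl e1 e2 e1' e2'.
Qed.

Lemma uniqJ A B : A *m A = - 1%:M -> cj A = A -> cj B = B ->
  (eigenspace A 'i <= eigenspace B 'i)%MS -> A = B.
Proof.
move=> AA Ar Br s1; apply: mat_ext => v.
case/addsP: (invJ_split v AA) => v1 [v2 [h1 h2 ->]].
have h1' := submx_trans h1 s1.
move/eigenspaceP: h1 => e1; move/eigenspaceP: h1' => e1'.
move/eigenspaceP: (h2) => e2.
have e2' : v2 *m B = - 'i *: v2.
  have c2 : (cj v2 <= eigenspace A 'i)%MS.
    apply/eigenspaceP; rewrite -Ar -cM e2 cZ -{2}(conjCK 'i) (conjCi C) //.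
  move/eigenspaceP: (submx_trans c2 s1) => e.
  by rewrite -[v2]cK -Br -cM e cZ (conjCi C).
by rewrite !mulmxDl e1 e2 e1' e2'.
Qed.

Lemma rank_eig_le A : (\rank (eigenspace A 1) + \rank (eigenspace A (-1)) <= k)%N.
Proof.
rewrite -mxrank_sum_cap.
have -> : \rank (eigenspace A 1 :&: eigenspace A (-1))%MS = 0%N.
  apply/eqP; rewrite mxrank_eq0 -submx0; apply/row_subP => i.
  set w := row i _.
  have : (w <= eigenspace A 1 :&: eigenspace A (-1))%MS by exact: row_sub.
  rewrite sub_capmx => /andP [/eigenspaceP e1 /eigenspaceP e2].
  have hw : w = - w by rewrite -scaleN1r -e2 e1 scale1r.
  rewrite submx0; apply/eqP.
  have : (2 : C) *: w = 0 by rewrite -[2]/(1 + 1) scalerDl scale1r {1}hw addNr.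
  by move/eqP; rewrite scaler_eq0 (negPf (@two_neq0 C)) => /eqP.
by rewrite addn0 rank_leq_col.
Qed.

End Gen.


Section Main.
Variable C : numClosedFieldType.
Variables m k : nat.
Variables (F J : 'M[C]_(m + m)) (I : 'M[C]_(k, m)).
Hypotheses (hyp : gen_para_herm F J) (Ir : I \is a realmx) (Ifree : row_free I).

Let g := gammaM F J.
Let a := psiM F J.
Let f := Fmx F J.
Let gN := I *m g *m I^T.
Let aN := I *m a *m I^T.
Let ZN := I *m ZP a g *m I^T.
Let ZMN := I *m ZM a g *m I^T.

Let Ap := pullback I (Hplus F J).
Let Am := pullback I (Hminus F J).
Let Bp := pullback I (cconjmx (Hplus F J)).
Let Bm := pullback I (cconjmx (Hminus F J)).

Let cAp (v : 'rV_(k + k)) : (v <= Ap)%MS <->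
  exists X : 'rV_k, X *m I *m f = 1 *: (X *m I) /\ v = row_mx X (X *m ZN).
Proof. exact: (@pull_graph C k m I _ (Hplus F J) f (ZP a g) 1 (fun u => Hchar hyp 1 u) v). Qed.
Let cAm (v : 'rV_(k + k)) : (v <= Am)%MS <->
  exists X : 'rV_k, X *m I *m f = (-1) *: (X *m I) /\ v = row_mx X (X *m ZN).
Proof. exact: (@pull_graph C k m I _ (Hminus F J) f (ZP a g) (-1) (fun u => Hchar hyp (-1) u) v). Qed.
Let cBp (v : 'rV_(k + k)) : (v <= Bp)%MS <->
  exists X : 'rV_k, X *m I *m cj f = 1 *: (X *m I) /\ v = row_mx X (X *m ZMN).
Proof. exact: (@pull_graph C k m I _ (cconjmx (Hplus F J)) (cj f) (ZM a g) 1 (fun u : 'rV_(m + m) => Hcharc hyp u (conjC1 C)) v). Qed.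
Let cBm (v : 'rV_(k + k)) : (v <= Bm)%MS <->
  exists X : 'rV_k, X *m I *m cj f = (-1) *: (X *m I) /\ v = row_mx X (X *m ZMN).
Proof. exact: (@pull_graph C k m I _ (cconjmx (Hminus F J)) (cj f) (ZM a g) (-1) (fun u : 'rV_(m + m) => Hcharc hyp u (conjCN1 C)) v). Qed.

Let ZNE : ZN = ZP aN gN.
Proof. by rewrite /ZN /ZP mulmxDr mulmxDl -scalemxAr -scalemxAl. Qed.
Let ZMNE : ZMN = ZM aN gN.
Proof. by rewrite /ZMN /ZM mulmxBr mulmxBl -scalemxAr -scalemxAl. Qed.
Let ZNB : ZN - ZMN = ('i *+ 2) *: gN.
Proof.
rewrite ZNE ZMNE /ZP /ZM opprB addrC addrA addrNK.
by rewrite -scalerDl mulr2n.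
Qed.

Let decomp (v : 'rV_(k + k)) : (v <= Ap + Am + Bp + Bm)%MS ->
  exists X1 X2 X3 X4 : 'rV_k,
   [/\ X1 *m I *m f = 1 *: (X1 *m I), X2 *m I *m f = (-1) *: (X2 *m I),
       X3 *m I *m cj f = 1 *: (X3 *m I), X4 *m I *m cj f = (-1) *: (X4 *m I) &
       v = row_mx ((X1 + X2) + (X3 + X4)) ((X1 + X2) *m ZN + (X3 + X4) *m ZMN)].
Proof.
case/addsP => w [v4 [/addsP [w' [v3 [/addsP [v1 [v2 [h1 h2 ->]]] h3 ->]]] h4 ->]].
case/cAp: h1 => X1 [e1 ->]; case/cAm: h2 => X2 [e2 ->].
case/cBp: h3 => X3 [e3 ->]; case/cBm: h4 => X4 [e4 ->].
exists X1, X2, X3, X4; split => //.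
by rewrite !add_row_mx !mulmxDl !addrA.
Qed.

Lemma partA : (Ap + Am + Bp + Bm == 1%:M)%MS -> regular_invariant F J I.
Proof.
case/andP => _ full.
have all (v : 'rV_(k + k)) : (v <= Ap + Am + Bp + Bm)%MS by exact: submx_trans (submx1 v) full.
have gNu : gN \in unitmx.
  rewrite -row_full_unit -sub1mx; apply/row_subP => i.
  have [X1 [X2 [X3 [X4 [_ _ _ _ hv]]]]] := decomp (all (row_mx 0 (row i 1%:M))).
  case/eq_row_mx: hv => e0 eY.
  have e34 : X3 + X4 = - (X1 + X2) by apply/eqP; rewrite -addr_eq0 addrC -e0.
  rewrite eY e34 mulNmx -mulmxN -mulmxDr ZNB -scalemxAr scalemxAl.
  exact: submxMl.
split => //; apply/row_subP => j.
pose X : 'rV[C]_k := row j 1%:M.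
have rI : row j I = X *m I by rewrite /X -row_mul mul1mx.
rewrite row_mul rI.
have [X1 [X2 [X3 [X4 [e1 e2 _ _ hv]]]]] := decomp (all (row_mx X (X *m ZN))).
case/eq_row_mx: hv => eX eZ.
have B0 : X3 + X4 = 0.
  set B' := X3 + X4 in eX eZ *.
  have : B' *m (ZN - ZMN) = 0.
    by rewrite mulmxBr; apply/eqP; rewrite subr_eq0; apply/eqP;
       apply: (@addrI _ ((X1 + X2) *m ZN)); rewrite -mulmxDl -eX.
  rewrite ZNB -scalemxAr => /eqP; rewrite scaler_eq0 (negPf (two_i_neq0 C)) /= => /eqP h.
  by rewrite -[B']mulmx1 -(mulmxV gNu) mulmxA h mul0mx.
rewrite eX B0 addr0 mulmxDl mulmxDl e1 e2 scale1r scaleN1r -mulNmx -mulmxDl.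
exact: submxMl.
Qed.

Section Reg.
Variable fN : 'M[C]_k.
Hypotheses (gNu : gN \in unitmx) (hfN : I *m f = fN *m I).

Let NF := NF_main hyp.
Let gr : cj g = g. Proof. by case: NF => [[]]. Qed.
Let gT : g^T = g. Proof. by case: NF => [[]]. Qed.
Let ar : cj a = a. Proof. by case: NF => [[]]. Qed.
Let aT : a^T = - a. Proof. by case: NF => [[]]. Qed.
Let ff : f *m f = 1%:M. Proof. exact: (proj1 (NF_f hyp)). Qed.
Let fg : f *m g = - (g *m f^T). Proof. exact: (proj2 (NF_f hyp)). Qed.
Let Irc : cj I = I. Proof. exact/realmxP. Qed.
Let inj p (X Y : 'M[C]_(p, k)) : X *m I = Y *m I -> X = Y. Proof. exact: (row_free_inj Ifree). Qed.

Let grN : cj gN = gN. Proof. by rewrite /gN !cM cT Irc gr. Qed.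
Let gTN : gN^T = gN. Proof. by rewrite /gN !trmx_mul trmxK gT mulmxA. Qed.
Let arN : cj aN = aN. Proof. by rewrite /aN !cM cT Irc ar. Qed.
Let aTN : aN^T = - aN. Proof. by rewrite /aN !trmx_mul trmxK aT mulNmx mulmxN mulmxA. Qed.
Let ffN : fN *m fN = 1%:M.
Proof.
apply: inj; rewrite /= -mulmxA -hfN mulmxA -hfN -mulmxA ff mulmx1 mul1mx //.
Qed.
Let fgN : fN *m gN = - (gN *m fN^T).
Proof.
rewrite /gN !mulmxA -hfN -(mulmxA I f g) fg mulmxN mulNmx.
by rewrite -!mulmxA -trmx_mul hfN trmx_mul.
Qed.
Let hfNc : I *m cj f = cj fN *m I.
Proof. by rewrite -{1}Irc -cM hfN cM Irc. Qed.

Let eqv (l : C) (X : 'rV_k) : X *m I *m f = l *: (X *m I) <-> X *m fN = l *: X.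
Proof.
rewrite -mulmxA hfN mulmxA scalemxAl; split; first exact: inj.
by move->.
Qed.
Let eqvc (l : C) (X : 'rV_k) : X *m I *m cj f = l *: (X *m I) <-> X *m cj fN = l *: X.
Proof.
rewrite -mulmxA hfNc mulmxA scalemxAl; split; first exact: inj.
by move->.
Qed.

Let rowPm (x y : 'rV_k) :
  row_mx x y *m Pm aN gN = row_mx x (x *m ZN) + row_mx y (y *m ZMN).
Proof. by rewrite /Pm mul_row_block !mulmx1 add_row_mx ZNE ZMNE. Qed.

Definition FN0 := MF aN gN fN.
Definition JN0 := MJ aN gN fN.

Lemma FN0_para : gen_para_herm FN0 JN0.
Proof. exact: model_para. Qed.

Lemma Eplus : (eigenspace FN0 1 == Ap + Bp)%MS.
Proof.
apply: eqmx_vec => v; rewrite /FN0 model_eig // addsP; split.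
  case=> x [y [hx hy ->]]; exists (row_mx x (x *m ZN)), (row_mx y (y *m ZMN)).
  by rewrite rowPm; split => //; [apply/cAp; exists x; split => //; apply/eqv |
    apply/cBp; exists y; split => //; apply/eqvc].
case=> v1 [v2 [/cAp [x [/eqv hx ->]] /cBp [y [/eqvc hy ->]] ->]].
by exists x, y; rewrite rowPm.
Qed.

Lemma Eminus : (eigenspace FN0 (-1) == Am + Bm)%MS.
Proof.
apply: eqmx_vec => v; rewrite /FN0 model_eig // addsP; split.
  case=> x [y [hx hy ->]]; exists (row_mx x (x *m ZN)), (row_mx y (y *m ZMN)).
  by rewrite rowPm; split => //; [apply/cAm; exists x; split => //; apply/eqv |
    apply/cBm; exists y; split => //; apply/eqvc].
case=> v1 [v2 [/cAm [x [/eqv hx ->]] /cBm [y [/eqvc hy ->]] ->]].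
by exists x, y; rewrite rowPm.
Qed.

Lemma EJ : (eigenspace JN0 'i == Ap + Bm)%MS.
Proof.
apply: eqmx_vec => v; rewrite /JN0 model_eigJ // addsP; split.
  case=> x [y [hx hy ->]]; exists (row_mx x (x *m ZN)), (row_mx y (y *m ZMN)).
  rewrite rowPm; split => //.
    by apply/cAp; exists x; split => //; apply/eqv; rewrite scale1r.
  by apply/cBm; exists y; split => //; apply/eqvc; rewrite scaleN1r.
case=> v1 [v2 [/cAp [x [/eqv hx ->]] /cBm [y [/eqvc hy ->]] ->]].
exists x, y; rewrite rowPm; split => //.
- by rewrite hx scale1r.
- by rewrite hy scaleN1r.
Qed.

Let S := (Ap + Am + Bp + Bm)%MS.
Let hAp : (Ap <= S)%MS.
Proof. by rewrite /S; apply: submx_trans (addsmxSl _ _); apply: submx_trans (addsmxSl _ _); exact: addsmxSl. Qed.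
Let hAm : (Am <= S)%MS.
Proof. by rewrite /S; apply: submx_trans (addsmxSl _ _); apply: submx_trans (addsmxSl _ _); exact: addsmxSr. Qed.
Let hBp : (Bp <= S)%MS.
Proof. by rewrite /S; apply: submx_trans (addsmxSl _ _); exact: addsmxSr. Qed.
Let hBm : (Bm <= S)%MS.
Proof. by rewrite /S; exact: addsmxSr. Qed.

Lemma full_sum : (Ap + Am + Bp + Bm == 1%:M)%MS.
Proof.
apply/andP; split; first exact: submx1.
have [[_ _ FF _] _] := FN0_para.
apply/row_subP => i; apply: submx_trans (inv_split (row i 1%:M) FF) _.
rewrite addsmx_sub; apply/andP; split.
  case/andP: Eplus => e _; apply: submx_trans e _.
  by rewrite addsmx_sub hAp hBp.
case/andP: Eminus => e _; apply: submx_trans e _.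
by rewrite addsmx_sub hAm hBm.
Qed.

Let rank_graph r (U : 'M[C]_(r, k + k)) (h Z : 'M[C]_k) (l : C) :
  (forall v : 'rV_(k + k), (v <= U)%MS -> exists X, X *m h = l *: X /\ v = row_mx X (X *m Z)) ->
  (\rank U <= \rank (eigenspace h l))%N.
Proof.
move=> hU.
have sub : (U <= eigenspace h l *m row_mx 1%:M Z)%MS.
  apply/row_subP => i; case: (hU _ (row_sub i U)) => X [hX ->].
  have -> : row_mx X (X *m Z) = X *m row_mx 1%:M Z by rewrite mul_mx_row mulmx1.
  by apply: submxMr; apply/eigenspaceP.
exact: leq_trans (mxrankS sub) (mxrankM_maxl _ _).
Qed.

Lemma direct : mxdirect (Ap + Am + Bp + Bm).
Proof.
rewrite mxdirectEgeq /=.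
have r1 : (k + k <= \rank (Ap + Am + Bp + Bm))%N.
  by case/andP: full_sum => _ /mxrankS; rewrite mxrank1.
have rAp : (\rank Ap <= \rank (eigenspace fN 1))%N.
  by apply: rank_graph => v /cAp [X [/eqv hX ->]]; exists X.
have rAm : (\rank Am <= \rank (eigenspace fN (-1)))%N.
  by apply: rank_graph => v /cAm [X [/eqv hX ->]]; exists X.
have rBp : (\rank Bp <= \rank (eigenspace (cj fN) 1))%N.
  by apply: rank_graph => v /cBp [X [/eqvc hX ->]]; exists X.
have rBm : (\rank Bm <= \rank (eigenspace (cj fN) (-1)))%N.
  by apply: rank_graph => v /cBm [X [/eqvc hX ->]]; exists X.
have e1 := rank_eig_le fN; have e2 := rank_eig_le (cj fN).
lia.
Qed.

Lemma uniq_def (FN JN : 'M[C]_(k + k)) : gen_para_herm FN JN ->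
  (eigenspace FN 1 == Ap + Bp)%MS -> (eigenspace FN (-1) == Am + Bm)%MS ->
  (eigenspace JN 'i == Ap + Bm)%MS -> FN = FN0 /\ JN = JN0.
Proof.
move=> [[_ /realmxP JNr FF JJ] _] e1 e2 e3.
have [[_ /realmxP J0r _ _] _] := FN0_para.
split.
  apply: uniqF FF _ _.
    by case/andP: e1 => s _; case/andP: Eplus => _ s'; apply: submx_trans s s'.
  by case/andP: e2 => s _; case/andP: Eminus => _ s'; apply: submx_trans s s'.
apply: uniqJ JJ JNr J0r _.
by case/andP: e3 => s _; case/andP: EJ => _ s'; apply: submx_trans s s'.
Qed.

Lemma triple0 : [/\ gammaM FN0 JN0 = gN, psiM FN0 JN0 = aN & Fmx FN0 JN0 = fN].
Proof. by split; [apply: model_gamma | apply: model_psi | apply: model_F]. Qed.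

End Reg.

End Main.


Unset Implicit Arguments.

Theorem proposition4p1 (C : numClosedFieldType) (m k : nat)
  (F J : 'M[C]_(m + m)) (I : 'M[C]_(k, m)) :
  gen_para_herm F J -> I \is a realmx -> row_free I ->
  let Ap := pullback I (Hplus F J) in
  let Am := pullback I (Hminus F J) in
  let Bp := pullback I (cconjmx (Hplus F J)) in
  let Bm := pullback I (cconjmx (Hminus F J)) in
  let defines (FN JN : 'M[C]_(k + k)) :=
    [/\ gen_para_herm FN JN,
        (eigenspace FN 1 == Ap + Bp)%MS,
        (eigenspace FN (-1) == Am + Bm)%MS &
        (eigenspace JN 'i == Ap + Bm)%MS] in
  (regular_invariant F J I <->
     [/\ mxdirect (Ap + Am + Bp + Bm),
         (Ap + Am + Bp + Bm == 1%:M)%MS &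
         exists FN JN, defines FN JN])
  /\
  (regular_invariant F J I ->
     forall FN JN, defines FN JN ->
       [/\ gammaM FN JN = I *m gammaM F J *m I^T,
           psiM FN JN = I *m psiM F J *m I^T &
           I *m Fmx F J = Fmx FN JN *m I]).
Proof.
move=> hyp Ir Ifree Ap Am Bp Bm defines.
split.
  split.
    case=> gNu /submxP [fN hfN].
    split; first exact: (direct hyp Ir Ifree gNu hfN).
      exact: (full_sum hyp Ir Ifree gNu hfN).
    exists (FN0 F J I fN), (JN0 F J I fN); split.
    - exact: (FN0_para hyp Ir Ifree gNu hfN).
    - exact: (Eplus hyp Ir Ifree gNu hfN).
    - exact: (Eminus hyp Ir Ifree gNu hfN).
    - exact: (EJ hyp Ir Ifree gNu hfN).
  by case=> _ full _; apply: (partA hyp).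
case=> gNu /submxP [fN hfN] FN JN [hp e1 e2 e3].
have [-> ->] := uniq_def hyp Ir Ifree gNu hfN hp e1 e2 e3.
have [t1 t2 t3] := triple0 hyp Ir Ifree gNu hfN.
by rewrite t1 t2 t3 hfN.
Qed.
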